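(* Let $C$ be a clause and $\Gamma$ a set of clauses with designated blocking variables. Suppose there is a permutation $\pi$ of the variables (viewed as a substitution) such that (1) $\pi$ maps the set of blocking variables to itself, (2) the substitution $\lnot C\circ\pi$ satisfies $C$, and (3) $\Gamma{\upharpoonright}_{\lnot C}\supseteq\Gamma{\upharpoonright}_{\lnot C\circ\pi}$. Then $C$ is cost-SR w.r.t. $\Gamma$.
   Context: Substitutions map variables to $0$, $1$ or literals ($\sigma(\lnot x)=\lnot\sigma(x)$, $\sigma(0)=0$, $\sigma(1)=1$); $(\sigma\circ\tau)(x)=\sigma(\tau(x))$; total assignments assign all variables. $C{\upharpoonright}_\sigma$: apply $\sigma$ to the literals and simplify; $\sigma$ satisfies $C$ if the result is $1$ or tautological; $\Gamma{\upharpoonright}_\sigma$ is the multiset of $C{\upharpoonright}_\sigma\ne1$, $C\in\Gamma$. $\lnot C$ is the partial assignment falsifying all literals of $C$. $\Gamma\vdash_1 D$ means unit propagation on $\Gamma{\upharpoonright}_{\lnot D}$ derives the empty clause; $\Gamma\vdash_1\Delta$ means this for all $D\in\Delta$. $\mathrm{cost}(\alpha)=\sum_i\alpha(b_i)$ over blocking variables. $C$ is cost-SR w.r.t. $\Gamma$ if there is a substitution $\sigma$ with (1) $\Gamma{\upharpoonright}_{\lnot C}\vdash_1(\Gamma\cup\{C\}){\upharpoonright}_\sigma$ and (2) $\mathrm{cost}(\tau\circ\sigma)\le\mathrm{cost}(\tau)$ for all total $\tau\supseteq\lnot C$. *)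

(* Defs.v *)
From HB Require Import structures.
From mathcomp Require Import all_boot all_fingroup.
Set Implicit Arguments. Unset Strict Implicit. Unset Printing Implicit Defensive.

Section CostSR.
Variable V : finType.

(* A literal is a pair (v, b): b = true is the positive literal v, b = false is ~v. *)
Definition lit := (V * bool)%type.
Definition lneg (l : lit) : lit := (l.1, ~~ l.2).

Definition clause := {set lit}.

Inductive term := TConst of bool | TLit of lit.
Definition subst := V -> term.

Definition tneg (t : term) : term :=
  match t with TConst b => TConst (~~ b) | TLit l => TLit (lneg l) end.

Definition subst_lit (s : subst) (l : lit) : term :=
  if l.2 then s l.1 else tneg (s l.1).

Definition subst_term (s : subst) (t : term) : term :=
  match t with TConst b => TConst b | TLit l => subst_lit s l end.

Definition subst_comp (s t : subst) : subst := fun x => subst_term s (t x).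

Definition perm_sub (p : {perm V}) : subst := fun v => TLit (p v, true).

Definition is_true_term (t : term) : bool :=
  if t is TConst true then true else false.
Definition term_is_lit (t : term) (l : lit) : bool :=
  if t is TLit l' then l' == l else false.

(* C|_sigma : None stands for the constant 1 (satisfied clause);
   otherwise the clause of the literals not mapped to 0. *)
Definition restrict_clause (s : subst) (C : clause) : option clause :=
  if [exists l in C, is_true_term (subst_lit s l)] then None
  else Some [set l | [exists l0 in C, term_is_lit (subst_lit s l0) l]].

Definition tautological (C : clause) : bool :=
  [exists l, (l \in C) && (lneg l \in C)].

Definition satisfies (s : subst) (C : clause) : bool :=
  match restrict_clause s C with None => true | Some D => tautological D end.

(* Gamma|_sigma : the multiset (list) of the C|_sigma <> 1, C in Gamma *)
Definition restrict (s : subst) (G : seq clause) : seq clause :=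
  pmap (restrict_clause s) G.

(* ~C : the partial assignment falsifying all literals of C
   (well defined for non-tautological C); unassigned variables are fixed. *)
Definition negC (C : clause) : subst := fun v =>
  if (v, true) \in C then TConst false
  else if (v, false) \in C then TConst true
  else TLit (v, true).

Definition unit_sub (l : lit) : subst := fun v =>
  if v == l.1 then TConst l.2 else TLit (v, true).

Inductive up_refutes : seq clause -> Prop :=
| UPEmpty F : set0 \in F -> up_refutes F
| UPUnit F l : [set l] \in F -> up_refutes (restrict (unit_sub l) F) -> up_refutes F.

Definition up_derives (G : seq clause) (D : clause) : Prop :=
  up_refutes (restrict (negC D) G).

Definition up_derives_all (G Delta : seq clause) : Prop :=
  forall D, D \in Delta -> up_derives G D.

Definition total (s : subst) : Prop := forall v, exists b, s v = TConst b.

Definition extends (tau alpha : subst) : Prop :=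
  forall v b, alpha v = TConst b -> tau v = TConst b.

Definition cost (B : {set V}) (a : subst) : nat :=
  \sum_(b in B) (if a b is TConst true then 1 else 0).

Definition cost_SR (B : {set V}) (G : seq clause) (C : clause) : Prop :=
  exists s : subst,
    up_derives_all (restrict (negC C) G) (restrict s (C :: G)) /\
    (forall tau, total tau -> extends tau (negC C) ->
       cost B (subst_comp tau s) <= cost B tau).

End CostSR.

(* Main.v *)
Require Import Defs.
From mathcomp Require Import all_boot all_fingroup.

Lemma sublit_gen (V : finType) (s : subst V) (f : V -> V) (l0 l : lit V) :
  (forall v l, s v = TLit l -> l = (f v, true)) ->
  subst_lit s l0 = TLit l -> l = (f l0.1, l0.2).
Proof.
move=> H; case: l0 => v b; rewrite /subst_lit /=.
case: b; case E: (s v) => [c|l'] //= [<-]; by rewrite (H _ _ E).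
Qed.

Lemma negC_lit (V : finType) (C : clause V) v l :
  negC C v = TLit l -> l = (id v, true).
Proof. rewrite /negC; case: ifP => _ //; case: ifP => _ //; by case=> <-. Qed.

Lemma sC_lit (V : finType) (C : clause V) (p : {perm V}) v l :
  subst_comp (negC C) (perm_sub p) v = TLit l -> l = (p v, true).
Proof. rewrite /subst_comp /perm_sub /= /subst_lit /=; exact: negC_lit. Qed.

Theorem lemma6p5 (V : finType) (B : {set V}) (G : seq (clause V)) (C : clause V)
    (p : {perm V}) :
  ~~ tautological C ->
  (forall D, D \in G -> ~~ tautological D) ->
  [set p b | b in B] = B ->
  satisfies (subst_comp (negC C) (perm_sub p)) C ->
  {subset restrict (subst_comp (negC C) (perm_sub p)) G <= restrict (negC C) G} ->
  cost_SR B G C.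
Proof.
move=> ntC ntG pB sat sub.
set s := subst_comp (negC C) (perm_sub p).
exists s; split.
- have CN : restrict_clause s C = None.
    move: sat; rewrite /satisfies; case E: (restrict_clause s C) => [D|] // tD.
    move: E tD; rewrite /restrict_clause; case: ifP => // _ [<-] tD.
    case/negP: ntC; case/existsP: tD => l /andP [].
    rewrite !inE => /existsP [l1 /andP [l1C h1]] /existsP [l2 /andP [l2C h2]].
    move: h1 h2; case E1: (subst_lit s l1) => [//|m1] /eqP m1l;
      case E2: (subst_lit s l2) => [//|m2] /eqP m2l.
    have := @sublit_gen V _ _ _ _ (@sC_lit V C p) E1; have := @sublit_gen V _ _ _ _ (@sC_lit V C p) E2.
    rewrite m1l m2l; case: l m1l m2l => w b _ _ /= [e2 e2'] [e1 e1'].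
    have ev : l1.1 = l2.1 by apply: (perm_inj (s:=p)); rewrite -e1 -e2.
    apply/existsP; exists l1; rewrite l1C /=.
    clear E1 E2 e1 e2.
    case: l1 l2 l2C ev e1' e2' {l1C} => v1 b1 [v2 b2] l2C /= ev e1' e2'.
    by rewrite /lneg /= ev -e1' e2'.
  move=> D; rewrite /restrict /= CN /= => /sub DG.
  have [D0 D0G ED] : exists2 D0, D0 \in G & restrict_clause (negC C) D0 = Some D.
    move: DG; rewrite /restrict; elim: G {sub ntG} => //= E G' IH.
    case ER: (restrict_clause (negC C) E) => [D1|] /=.
      rewrite inE => /orP [/eqP ->|/IH [D0 h1 h2]]; first by exists E; rewrite ?inE ?eqxx.
      by exists D0; rewrite // inE h1 orbT.
    by move/IH => [D0 h1 h2]; exists D0; rewrite // inE h1 orbT.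
  have DD0 : D \subset D0.
    move: ED; rewrite /restrict_clause; case: ifP => // _ [<-].
    apply/subsetP => l; rewrite inE => /existsP [l0 /andP [l0D]].
    case E0: (subst_lit _ l0) => [//|m] /eqP ml.
    have := @sublit_gen V _ _ _ _ (@negC_lit V C) E0; rewrite ml /= => ->.
    by case: l0 l0D {E0}.
  have ntD : ~~ tautological D.
    apply: contra (ntG _ D0G) => /existsP [l /andP [a b]].
    by apply/existsP; exists l; rewrite (subsetP DD0 _ a) (subsetP DD0 _ b).
  rewrite /up_derives; apply: UPEmpty.
  rewrite /restrict mem_pmap; apply/mapP; exists D; first by [].
  have allf : forall l, l \in D -> subst_lit (negC D) l = @TConst V false.
    case=> v b lD; rewrite /subst_lit /negC /=; case: b lD => lD.
      by rewrite lD.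
    case: ifP => vt.
      by case/negP: ntD; apply/existsP; exists (v, true); rewrite vt.
    by rewrite lD.
  rewrite /restrict_clause; case: ifP.
    by case/existsP => l /andP [lD]; rewrite allf.
  move=> _; congr Some; apply/setP => l; rewrite !inE; apply/esym/negbTE.
  apply/existsP => [[l0 /andP [l0D]]]; by rewrite allf.
- move=> tau tot ext.
  have key : forall b, subst_comp tau s b = tau (p b).
    move=> b; rewrite /subst_comp /s /subst_comp /perm_sub /= /subst_lit /=.
    case E: (negC C (p b)) => [c|l] /=; first by rewrite (ext _ _ E).
    by rewrite (@negC_lit V _ _ _ E) /subst_lit.
  rewrite /cost; under eq_bigr => b _ do rewrite key.
  rewrite -{2}pB big_imset //; by move=> x y _ _; apply: perm_inj.
Qed.
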